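(* Let $k\ge2$ be an integer, let $1<p\le\pi^2(k-1/2)^2-1$, and define \[\psi_k(x)=\sin^p(\pi x)\Big(\frac1{(k-x)^p}+\frac1{(k+x-1)^p}\Big).\] Then $\psi_k$ is decreasing on $[1/2,1]$. *)

(* Defs.v *)
(* R : realType, real powers via powR (0 `^ p = 0 for p <> 0). *)
From HB Require Import structures.
From mathcomp Require Import all_boot all_order all_algebra.
From mathcomp Require Import all_classical all_reals all_analysis.
Set Implicit Arguments. Unset Strict Implicit. Unset Printing Implicit Defensive.
Import Order.TTheory GRing.Theory Num.Theory.
Local Open Scope ring_scope.

Definition psi (R : realType) (k : nat) (p x : R) : R :=
  (sin (pi * x)) `^ p * (1 / (k%:R - x) `^ p + 1 / (k%:R + x - 1) `^ p).

(* Main.v *)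
Require Import Defs.
From HB Require Import structures.
From mathcomp Require Import all_boot all_order all_algebra.
From mathcomp Require Import all_classical all_reals all_analysis.
From mathcomp Require Import ring lra.
Import Order.TTheory GRing.Theory Num.Theory.
Local Open Scope ring_scope.
Local Open Scope classical_set_scope.
Section S.
Variable R : realType.
Lemma sin_ge (u : R) : 0 < u < pi -> u * cos u < sin u.
Proof.
move=> /andP[u0 upi].
have D : forall v : R, is_derive v 1 (fun v => sin v - v * cos v) (v * sin v).
  move=> v; have _ : v = v :> R by [].
  have H : is_derive v (1:R) ((@sin R) - (id * (@cos R))) (cos v - (v * (- sin v) + cos v * 1)).
    by apply: is_deriveB; apply: is_deriveM.
  apply: (is_derive_eq H).
  by rewrite /=; ring.
have C : {within `[0, u], continuous (fun v : R => sin v - v * cos v)}.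
  apply: derivable_within_continuous => v _. by have [] := D v.
have [c cI E] := MVT u0 (fun v _ => D v) C.
move: E; rewrite sin0 mul0r subr0 subr0.
move=> E; rewrite -subr_gt0 E; apply: mulr_gt0; last by rewrite subr0.
apply: mulr_gt0; first by rewrite (itvP cI).
apply: sin_gt0_pi; rewrite (itvP cI) /=. by apply: lt_trans upi; rewrite (itvP cI).
Qed.


Lemma dln (g : R -> R) (x dg : R) : 0 < g x -> is_derive x 1 g dg ->
  is_derive x 1 (fun y => ln (g y)) (dg / g x).
Proof.
move=> gx D.
have := @is_derive1_comp R (@ln R) g x (g x)^-1 dg (is_derive1_ln gx) D.
by move=> H; apply: (is_derive_eq H); rewrite mulrC.
Qed.

Lemma dexp (g : R -> R) (x dg : R) : is_derive x 1 g dg ->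
  is_derive x 1 (fun y => expR (g y)) (expR (g x) * dg).
Proof.
move=> D.
exact: (@is_derive1_comp R (@expR R) g x (expR (g x)) dg (is_derive_expR (g x)) D).
Qed.

Lemma dsinpi (x : R) : is_derive x 1 (fun y : R => sin (pi * y)) (cos (pi * x) * pi).
Proof.
have D : is_derive x (1:R) (fun y : R => pi * y) pi.
  have H : is_derive x (1:R) (cst (pi:R) * id) (pi * 1 + x * 0).
    by apply: is_deriveM.
  by apply: (is_derive_eq H); rewrite mulr1 mulr0 addr0.
exact: (@is_derive1_comp R (@sin R) (fun y => pi * y) x _ _ (is_derive_sin _) D).
Qed.


Lemma keyH (b u : R) : 3 <= b -> 0 < u -> u < 1/2 -> (b - u) * u < 1 ->
  b^+2 * (ln (b+u) - ln (b-u)) < ln (1 + (b+u)*u) - ln (1 - (b-u)*u).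
Proof.
move=> b3 u0 u2 hu.
pose h := fun v : R => ln (1 + (b+v)*v) - ln (1 - (b-v)*v) - b^+2 * (ln (b+v) - ln (b-v)).
pose hd := fun v : R => (b + 2 * v) / (1 + (b+v)*v) - (- (b - 2 * v)) / (1 - (b-v)*v)
   - b^+2 * (1 / (b+v) - (-1) / (b-v)).
have pos : forall v, 0 <= v <= u -> [/\ 0 < b + v, 0 < b - v, 0 < 1 + (b+v)*v & 0 < 1 - (b-v)*v].
  move=> v /andP[v0 vu]; split; [lra|lra|nra|].
  have : (b - v) * v <= (b - u) * u by nra.
  lra.
have D : forall v, 0 <= v <= u -> is_derive v (1:R) h (hd v).
  move=> v /pos [p1 p2 p3 p4].
  have d1 : is_derive v (1:R) (fun v => 1 + (b+v)*v) (b + 2 * v).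
    have H : is_derive v (1:R) (cst 1 + (cst b + id) * id) (0 + ((b + v) * 1 + v * (0 + 1))).
      by apply: is_deriveD; apply: is_deriveM.
    by apply: (is_derive_eq H); rewrite /=; ring.
  have d2 : is_derive v (1:R) (fun v => 1 - (b-v)*v) (- (b - 2 * v)).
    have H : is_derive v (1:R) (cst 1 - (cst b - id) * id) (0 - ((b - v) * 1 + v * (0 - 1))).
      by apply: is_deriveB; apply: is_deriveM.
    by apply: (is_derive_eq H); rewrite /=; ring.
  have d3 : is_derive v (1:R) (fun v => b + v) 1.
    have H : is_derive v (1:R) (cst b + id) (0 + 1) by apply: is_deriveD.
    by apply: (is_derive_eq H); rewrite add0r.
  have d4 : is_derive v (1:R) (fun v => b - v) (-1).
    have H : is_derive v (1:R) (cst b - id) (0 - 1) by apply: is_deriveB.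
    by apply: (is_derive_eq H); rewrite add0r.
  have H : is_derive v (1:R) ((fun v => ln (1 + (b+v)*v)) - (fun v => ln (1 - (b-v)*v))
      - (cst (b^+2)) * ((fun v => ln (b+v)) - (fun v => ln (b-v))))
     ((b + 2 * v) / (1 + (b+v)*v) - (- (b - 2 * v)) / (1 - (b-v)*v)
      - (b^+2 * (1 / (b+v) - (-1) / (b-v)) + (ln (b+v) - ln (b-v)) * 0)).
    apply: is_deriveB; first by apply: is_deriveB; apply: dln.
    apply: is_deriveM.
    by apply: is_deriveB; apply: dln.
  by apply: (is_derive_eq H); rewrite /hd mulr0 addr0.
have C : {within `[0, u], continuous h}.
  apply: derivable_within_continuous => v vI.
  have vv : 0 <= v <= u by rewrite !(itvP vI).
  by have [] := D v vv.
have D' : forall v : R, v \in `]0, u[%R -> is_derive v (1:R) h (hd v).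
  move=> v; rewrite in_itv /= => /andP[a1 a2]; apply: D; by rewrite !ltW.
have [c cI E] := MVT u0 D' C.
have h0 : h 0 = 0.
  by rewrite /h !addr0 !subr0 !mulr0 !addr0 !subr0 !subrr mulr0 subrr.
move: E; rewrite h0 subr0 /h => E.
suff : 0 < hd c * (u - 0) by rewrite -E; lra.
have [p1 p2 p3 p4] := pos c (ltac:(by rewrite !(itvP cI))).
apply: mulr_gt0; last by rewrite subr0.
have c0 : 0 < c by rewrite (itvP cI).
have cu : c < u by rewrite (itvP cI).
have -> : hd c = 2 * b * c^+2 * (b^+4 - 3 * b^+2 - 1 - (b^+2 - 1) * c^+2) /
   ((1 + (b+c)*c) * (1 - (b-c)*c) * (b+c) * (b-c)).
  rewrite /hd; field.
  by rewrite !gt_eqF.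
apply: divr_gt0; last by rewrite !mulr_gt0.
apply: mulr_gt0; first by rewrite mulr_gt0 ?exprn_gt0 // mulr_gt0 //; lra.
have b2 : 9 <= b^+2 by nra.
have c2 : c^+2 <= 1/4 by nra.
nra.
Qed.


Lemma sign (K p z : R) : 2 <= K -> 1 < p -> p + 1 <= (pi * (K - 1/2))^+2 -> 1/2 < z -> z < 1 ->
  expR (p * (ln (sin (pi*z)) - ln (K - z))) * (p * (cos (pi*z) * pi / sin (pi*z) + 1/(K - z)))
  + expR (p * (ln (sin (pi*z)) - ln (K + z - 1))) * (p * (cos (pi*z) * pi / sin (pi*z) - 1/(K + z - 1))) < 0.
Proof.
move=> K2 p1 hp z1 z2.
have pi2 : 2 <= pi :> R := @pi_ge2 R.
set u := pi * (z - 1/2).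
have u0 : 0 < u by rewrite /u mulr_gt0 //; lra.
have upi : u < pi by rewrite /u; nra.
have eS : sin (pi * z) = cos u by rewrite -sinDpihalf /u; congr sin; field.
have eC : cos (pi * z) = - sin u by rewrite -cosDpihalf /u; congr cos; field.
rewrite eS eC.
set s := cos u. set C := sin u.
have C0 : 0 < C by apply: sin_gt0_pi; rewrite u0 upi.
have s0 : 0 < s by rewrite /s -eS; apply: sin_gt0_pi; apply/andP; split; nra.
have T : u * s < C by apply: sin_ge; rewrite u0 upi.
set a := K - z. set bt := K + z - 1.
have a1 : 1 < a by rewrite /a; lra.
have ab : a < bt by rewrite /a /bt; lra.
have a0 : 0 < a by lra.
have b0 : 0 < bt by lra.
set EB := expR (p * (ln s - ln bt)).
set L := ln bt - ln a.
have L0 : 0 < L by rewrite /L subr_gt0 ltr_ln // posrE.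
have EAe : expR (p * (ln s - ln a)) = EB * expR (p * L).
  by rewrite /EB -expRD /L; congr expR; ring.
rewrite EAe.
have EB0 : 0 < EB by apply: expR_gt0.
set X := expR (p * L).
have X0 : 0 < X by apply: expR_gt0.
have p0 : 0 < p by lra.
case: (lerP (1/a - C * pi / s) 0) => hc.
  have t1 : EB * X * (p * (- C * pi / s + 1 / a)) <= 0.
    rewrite pmulr_rle0; last by rewrite mulr_gt0.
    rewrite pmulr_rle0 //. move: hc; rewrite mulNr. lra.
  have t2 : EB * (p * (- C * pi / s - 1 / bt)) < 0.
    rewrite pmulr_rlt0 // pmulr_rlt0 //.
    have : 0 < C * pi / s by apply: divr_gt0 => //; apply: mulr_gt0 => //; lra.
    have : 0 < 1 / bt by rewrite divr_gt0.
    rewrite mulNr. lra.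
  lra.
have hD : 0 < s - C * pi * a.
  move: hc; rewrite subr_gt0 ltr_pdivrMr // mulrAC ltr_pdivlMr //.
  rewrite mul1r. lra.
set b := pi * (K - 1/2).
have ebu : b + u = pi * bt by rewrite /b /u /bt; field.
have ebu' : b - u = pi * a by rewrite /b /u /a; field.
have hD' : 0 < 1 - (b - u) * u.
  rewrite ebu'.
  have : pi * a * (u * s) < pi * a * C by rewrite ltr_pM2l // mulr_gt0 //; lra.
  nra.
have b3 : 3 <= b by rewrite /b; nra.
have u2 : u < 1/2.
  have : 2 < b - u by rewrite ebu'; nra.
  nra.
have H := @keyH b u b3 u0 u2 (ltac:(lra)).
have eL : ln (b + u) - ln (b - u) = L.
  rewrite ebu ebu' /L !lnM ?posrE //; try lra.
rewrite eL in H.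
set N := s + C * pi * bt.
set D := s - C * pi * a.
have N0 : 0 < N by rewrite /N; apply: addr_gt0 => //; rewrite !mulr_gt0 //; lra.
have hN' : 0 < 1 + (b + u) * u by rewrite ebu; apply: addr_gt0; [lra|rewrite !mulr_gt0 //; lra].
have cross : (1 + (b + u) * u) * D <= N * (1 - (b - u) * u).
  rewrite ebu ebu' /N /D.
  have : 0 <= pi * (a + bt) * (C - u * s).
    by apply: mulr_ge0; [apply: mulr_ge0; lra | lra].
  move=> h; rewrite -subr_ge0.
  have -> : N * (1 - pi * a * u) - (1 + pi * bt * u) * D = pi * (a + bt) * (C - u * s).
    by rewrite /N /D; ring.
  by [].
have lncross : ln (1 + (b + u) * u) - ln (1 - (b - u) * u) <= ln N - ln D.
  have := cross; rewrite -(@ler_ln R) ?posrE ?mulr_gt0 //.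
  rewrite !lnM ?posrE //. lra.
have big : (p + 1) * L < ln N - ln D.
  have : (p + 1) * L <= b^+2 * L by rewrite ler_pM2r.
  lra.
have : expR ((p + 1) * L) < N / D.
  have -> : N / D = expR (ln N - ln D).
    by rewrite expRD expRN !lnK ?posrE.
  by rewrite ltr_expR.
have -> : expR ((p + 1) * L) = X * (bt / a).
  by rewrite mulrDl mul1r expRD /L expRD expRN !lnK ?posrE.
rewrite ltr_pdivlMr // => key.
have -> : EB * X * (p * (- C * pi / s + 1 / a)) + EB * (p * (- C * pi / s - 1 / bt))
   = EB * p / (s * a * bt) * (X * bt * D - N * a).
  rewrite /D /N; field.
  by rewrite !gt_eqF.
rewrite pmulr_rlt0; last by apply: divr_gt0; [apply: mulr_gt0 | rewrite !mulr_gt0].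
rewrite subr_lt0.
have : X * (bt / a) * D * a = X * bt * D by field; exact: lt0r_neq0.
nra.
Qed.


Lemma powRpos (a x : R) : 0 < a -> a `^ x = expR (x * ln a).
Proof. by move=> a0; rewrite /powR gt_eqF. Qed.

End S.

Local Close Scope classical_set_scope.

Theorem corollary2 (R : realType) (k : nat) (p : R)
  (hk : (2 <= k)%N) (hp1 : 1 < p)
  (hp2 : p <= pi ^+ 2 * (k%:R - 1 / 2) ^+ 2 - 1) :
  forall x y : R, 1 / 2 <= x -> x < y -> y <= 1 -> psi k p y < psi k p x.
Proof.
move=> x y hx xy hy.
have K2 : 2 <= k%:R :> R by rewrite (ler_nat R 2 k).
have pi2 : 2 <= pi :> R := @pi_ge2 R.
have hp' : p + 1 <= (pi * (k%:R - 1/2))^+2 by rewrite exprMn; lra.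
have p0 : 0 < p by lra.
have spos : forall z : R, 0 < z < 1 -> 0 < sin (pi * z).
  move=> z /andP[z0 z1]; apply: sin_gt0_pi; apply/andP; split; nra.
have x1 : x < 1 by lra.
case: (eqVneq y 1) => [ey | y1].
  rewrite ey /psi mulr1 sinpi powR0 ?gt_eqF // mul0r.
  rewrite /psi; apply: mulr_gt0.
    by apply: powR_gt0; apply: spos; apply/andP; split; lra.
  by apply: addr_gt0; apply: divr_gt0 => //; apply: powR_gt0; lra.
have y1' : y < 1 by rewrite lt_neqAle y1 hy.
set K : R := k%:R.
pose g := fun z : R => expR (p * (ln (sin (pi*z)) - ln (K - z)))
   + expR (p * (ln (sin (pi*z)) - ln (K + z - 1))).
pose gd := fun z : R => expR (p * (ln (sin (pi*z)) - ln (K - z))) * (p * (cos (pi*z) * pi / sin (pi*z) + 1/(K - z)))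
  + expR (p * (ln (sin (pi*z)) - ln (K + z - 1))) * (p * (cos (pi*z) * pi / sin (pi*z) - 1/(K + z - 1))).
have Eg : forall z : R, 0 < z < 1 -> psi k p z = g z.
  move=> z zI; have := spos z zI; move: zI => /andP[z0 z1] sz.
  rewrite /psi -/K /g !powRpos //; try lra.
  rewrite !mulrBr !expRD !expRN mulrDr !div1r; ring.
have Dg : forall z : R, 0 < z < 1 -> is_derive z (1:R) g (gd z).
  move=> z zI; have := spos z zI; move: zI => /andP[z0 z1] sz.
  have dKm : is_derive z (1:R) (fun z => K - z) (-1).
    have H : is_derive z (1:R) (cst K - id) (0 - 1) by apply: is_deriveB.
    by apply: (is_derive_eq H); rewrite add0r.
  have dKp : is_derive z (1:R) (fun z => K + z - 1) 1.
    have H : is_derive z (1:R) (cst K + id - cst 1) (0 + 1 - 0) by apply: is_deriveB.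
    by apply: (is_derive_eq H); rewrite add0r subr0.
  have ls := @dln R _ z _ sz (@dsinpi R z).
  have l1 := @dln R (fun z => K - z) z (-1) (ltac:(rewrite /=; lra)) dKm.
  have l2 := @dln R (fun z => K + z - 1) z 1 (ltac:(rewrite /=; lra)) dKp.
  have i1 : is_derive z (1:R) (cst p * ((fun z => ln (sin (pi * z))) - (fun z => ln (K - z))))
     (p * (cos (pi * z) * pi / sin (pi * z) - (-1) / (K - z)) + (ln (sin (pi * z)) - ln (K - z)) * 0).
    by apply: is_deriveM; apply: is_deriveB.
  have i2 : is_derive z (1:R) (cst p * ((fun z => ln (sin (pi * z))) - (fun z => ln (K + z - 1))))
     (p * (cos (pi * z) * pi / sin (pi * z) - 1 / (K + z - 1)) + (ln (sin (pi * z)) - ln (K + z - 1)) * 0).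
    by apply: is_deriveM; apply: is_deriveB.
  have H : is_derive z (1:R) g
    (expR (p * (ln (sin (pi*z)) - ln (K - z))) * (p * (cos (pi * z) * pi / sin (pi * z) - (-1) / (K - z)) + (ln (sin (pi * z)) - ln (K - z)) * 0)
    + expR (p * (ln (sin (pi*z)) - ln (K + z - 1))) * (p * (cos (pi * z) * pi / sin (pi * z) - 1 / (K + z - 1)) + (ln (sin (pi * z)) - ln (K + z - 1)) * 0)).
    by apply: is_deriveD.
  by apply: (is_derive_eq H); rewrite /gd !mulr0 !addr0; congr (_ + _); congr (_ * (_ * _)); ring.
have D' : forall v : R, v \in `]x, y[%R -> is_derive v (1:R) g (gd v).
  move=> v; rewrite in_itv /= => /andP[a1 a2]; apply: Dg; apply/andP; split; lra.
have [c cI E] : exists2 c, c \in `]x, y[%R & g y - g x = gd c * (y - x).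
  apply: (MVT xy D').
  apply: derivable_within_continuous => v vI.
  have vv : 0 < v < 1 by move: vI; rewrite in_itv /= => /andP[a1 a2]; apply/andP; split; lra.
  by have [] := Dg v vv.
have [cx cy] : x < c /\ c < y by move: cI; rewrite in_itv /= => /andP[].
have c1 : 1/2 < c by lra.
have c2 : c < 1 by lra.
have neg := @sign R K p c K2 hp1 hp' c1 c2.
rewrite !Eg; first last.
- by apply/andP; split; lra.
- by apply/andP; split; lra.
have : gd c * (y - x) < 0 by rewrite nmulr_rlt0 // subr_gt0.
rewrite -E. lra.
Qed.
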